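(* For every integer $n\geq 5$, $\pi(\overline{C_n})=4$.
   Context: $C_n$ is the cycle on vertices $v_1,\dots,v_n$ (with $v_i$ adjacent to $v_{i+1}$, indices mod $n$), and $\overline{C_n}$ is its complement: two distinct vertices are adjacent in $\overline{C_n}$ iff they are not adjacent in $C_n$; for $n\geq 5$ it is connected. For a connected graph $G$, $d(x,y)$ denotes the graph distance. For a permutation $f$ of $V(G)$ and distinct vertices $x,y$, let $\delta_f(x,y)=|d(x,y)-d(f(x),f(y))|$, and let $\delta_f(G)=\sum \delta_f(x,y)$, the sum over all unordered pairs $\{x,y\}$ of distinct vertices. $\pi(G)$ denotes the smallest positive value of $\delta_f(G)$ over all permutations $f$ of $V(G)$. *)

(* Defs.v *)
From mathcomp Require Import all_boot all_fingroup.
Set Implicit Arguments. Unset Strict Implicit. Unset Printing Implicit Defensive.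

Fixpoint walk_within (T : finType) (e : rel T) (k : nat) (x y : T) : bool :=
  match k with
  | 0 => x == y
  | k'.+1 => walk_within e k' x y || [exists z, e x z && walk_within e k' z y]
  end.

(* Graph distance: least k with a walk of length <= k (hence a walk of length
   exactly k) from x to y; in a connected graph it is < #|T|.
   (Returns #|T| if y is unreachable; irrelevant for connected graphs.) *)
Definition gdist (T : finType) (e : rel T) (x y : T) : nat :=
  find (fun k => walk_within e k x y) (iota 0 #|T|).

Definition cycle_adj (n : nat) : rel 'I_n :=
  fun x y => (val y == (val x).+1 %% n) || (val x == (val y).+1 %% n).

Definition ccycle_adj (n : nat) : rel 'I_n :=
  fun x y => (x != y) && ~~ cycle_adj x y.

Definition absdiff (a b : nat) : nat := (a - b) + (b - a).

Definition delta_perm (n : nat) (e : rel 'I_n) (f : {perm 'I_n}) : nat :=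
  \sum_(x < n) \sum_(y < n | x < y) absdiff (gdist e x y) (gdist e (f x) (f y)).

Definition is_pi (n : nat) (e : rel 'I_n) (m : nat) : Prop :=
  0 < m /\ (exists f : {perm 'I_n}, delta_perm e f = m) /\
  (forall f : {perm 'I_n}, 0 < delta_perm e f -> m <= delta_perm e f).

(* Main.v *)
Require Import Defs.
From mathcomp Require Import all_boot all_fingroup zify.
Set Warnings "-notation-overridden".

Section S.
Variable n : nat.
Hypothesis hn : 5 <= n.

Lemma modS1 (x : nat) : x < n -> x.+1 %% n = if x.+1 == n then 0 else x.+1.
Proof.
move=> hx; case: eqP => [->|h]; first by rewrite modnn.
rewrite modn_small //; lia.
Qed.

Lemma ordeqE (x y : 'I_n) : (x == y) = (nat_of_ord x == nat_of_ord y).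
Proof. by []. Qed.

Lemma cadjE (x y : 'I_n) : cycle_adj x y =
  [|| nat_of_ord y == nat_of_ord x + 1, (nat_of_ord x == (n - 1)) && (nat_of_ord y == 0),
      nat_of_ord x == nat_of_ord y + 1 | (nat_of_ord y == (n - 1)) && (nat_of_ord x == 0)].
Proof.
rewrite /cycle_adj; change (val x) with (nat_of_ord x); change (val y) with (nat_of_ord y).
rewrite !modS1 ?ltn_ord //.
have := ltn_ord x; have := ltn_ord y.
by case: ifP; case: ifP; move=> *; apply/idP/idP; lia.
Qed.

Lemma cadj_sym (x y : 'I_n) : cycle_adj x y = cycle_adj y x.
Proof. by rewrite /cycle_adj orbC. Qed.

Lemma cadj_irr (x : 'I_n) : cycle_adj x x = false.
Proof. rewrite cadjE; have := ltn_ord x; lia. Qed.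

Lemma ex1 (T : finType) (e : rel T) x y : [exists z, e x z && (z == y)] = e x y.
Proof.
apply/existsP/idP => [[z /andP[h /eqP <-]] //|h].
by exists y; rewrite h eqxx.
Qed.

Lemma walk1 (T : finType) (e : rel T) x y : walk_within e 1 x y = (x == y) || e x y.
Proof.
rewrite /=; congr (_ || _); apply/existsP/idP => [[z /andP[h /eqP <-]] //|h].
by exists y; rewrite h eqxx.
Qed.

Lemma walkS (T : finType) (e : rel T) k x y : walk_within e k.+1 x y =
  walk_within e k x y || [exists z, e x z && walk_within e k z y].
Proof. by []. Qed.

Lemma gdistE (x y : 'I_n) : gdist (@ccycle_adj n) x y =
  if x == y then 0 else (cycle_adj x y).+1.
Proof.
rewrite /gdist card_ord.
have -> : iota 0 n = [:: 0, 1, 2 & iota 3 (n - 3)].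
  by case: n hn => [|[|[|m]]] //= _; rewrite !subSS subn0.
have w2 : walk_within (@ccycle_adj n) 2 x y.
  rewrite walkS walk1.
  case: (boolP (x == y)) => // nxy.
  case: (boolP (ccycle_adj x y)) => // hA.
  have hA' : cycle_adj x y by move: hA; rewrite /ccycle_adj nxy /= negbK.
  apply/existsP.
  have hx := ltn_ord x; have hy := ltn_ord y.
  have nxy' : nat_of_ord x != nat_of_ord y by [].
  pose z := if nat_of_ord y == nat_of_ord x + 1 then (if nat_of_ord x + 3 < n then nat_of_ord x + 3 else nat_of_ord x + 3 - n)
            else if nat_of_ord x == nat_of_ord y + 1 then (if nat_of_ord y + 3 < n then nat_of_ord y + 3 else nat_of_ord y + 3 - n)
            else 2.
  have hz : z < n by rewrite /z; repeat case: ifP; lia.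
  exists (Ordinal hz).
  have key : ccycle_adj x (Ordinal hz) && ccycle_adj (Ordinal hz) y.
    rewrite /ccycle_adj !cadjE !ordeqE /=. move: hA'; rewrite cadjE /z.
    by repeat case: ifP; move=> *; lia.
  case/andP: key => -> h /=; apply/orP; right; apply/existsP; exists y.
  by rewrite h eqxx.
move: w2; rewrite /= => ->.
case: (boolP (x == y)) => //= nxy.
rewrite ex1 /ccycle_adj nxy /=.
by case: (cycle_adj x y).
Qed.

Notation A := (@cycle_adj n).

Lemma absdE (f : {perm 'I_n}) (x y : 'I_n) : x != y ->
  absdiff (gdist (@ccycle_adj n) x y) (gdist (@ccycle_adj n) (f x) (f y)) =
  (A x y != A (f x) (f y)).
Proof.
move=> nxy; have nf : f x != f y by rewrite (inj_eq perm_inj).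
rewrite !gdistE (negbTE nxy) (negbTE nf) /absdiff.
by case: (A x y); case: (A (f x) (f y)).
Qed.

Lemma deltaE (f : {perm 'I_n}) : delta_perm (@ccycle_adj n) f =
  \sum_(x < n) \sum_(y < n | x < y) (A x y != A (f x) (f y) : nat).
Proof.
apply: eq_bigr => x _; apply: eq_bigr => y hxy; apply: absdE.
by rewrite ordeqE; move: hxy; lia.
Qed.

Lemma double (M : 'I_n -> 'I_n -> nat) : (forall x y, M x y = M y x) ->
  (forall x, M x x = 0) ->
  \sum_(x < n) \sum_(y < n) M x y = 2 * \sum_(x < n) \sum_(y < n | x < y) M x y.
Proof.
move=> Ms M0.
have E : forall x : 'I_n, \sum_(y < n) M x y = \sum_(y < n | x < y) M x y + \sum_(y < n | y < x) M x y.
  move=> x; rewrite (bigID (fun y : 'I_n => x < y)) /=; congr (_ + _).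
  rewrite (bigID (fun y : 'I_n => y < x)) /= [X in _ + X]big1 ?addn0.
    by apply: eq_bigl => y; apply/idP/idP; lia.
  move=> y hy; have -> : y = x by apply/val_inj/eqP; move: hy; rewrite /=; lia.
  exact: M0.
rewrite (eq_bigr _ (fun x _ => E x)) big_split /= mul2n -addnn; congr (_ + _).
under eq_bigr => x _ do rewrite big_mkcond /=.
rewrite exchange_big /=; apply: eq_bigr => x _; rewrite [RHS]big_mkcond /=.
by apply: eq_bigr => y _; rewrite Ms.
Qed.

Lemma sum_eq1 (s : nat) : s < n -> \sum_(y < n) (nat_of_ord y == s : nat) = 1.
Proof.
move=> hs; rewrite (bigD1 (Ordinal hs)) //= eqxx big1 // => y hy.
by move: hy; rewrite ordeqE /= => /negbTE ->.
Qed.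

Lemma deg (x : 'I_n) : \sum_(y < n) (A x y : nat) = 2.
Proof.
have hx := ltn_ord x.
pose s := if nat_of_ord x == n - 1 then 0 else nat_of_ord x + 1.
pose t := if nat_of_ord x == 0 then n - 1 else nat_of_ord x - 1.
have hs : s < n by rewrite /s; case: ifP; lia.
have ht : t < n by rewrite /t; case: ifP; lia.
have hst : s != t by rewrite /s /t; case: ifP; case: ifP; lia.
have -> : 2 = \sum_(y < n) (nat_of_ord y == s : nat) + \sum_(y < n) (nat_of_ord y == t : nat).
  by rewrite !sum_eq1.
rewrite -big_split /=; apply: eq_bigr => y _.
have hy := ltn_ord y.
rewrite cadjE /s /t; case: ifP; case: ifP; move=> *;
  case: eqP; case: eqP; move=> *; lia.
Qed.

Definition pf (f : {perm 'I_n}) (x : 'I_n) :=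
  \sum_(y < n) (A x y && ~~ A (f x) (f y) : nat).
Definition qf (f : {perm 'I_n}) (x : 'I_n) :=
  \sum_(y < n) (~~ A x y && A (f x) (f y) : nat).

Lemma pq f x : pf f x = qf f x.
Proof.
have e1 : \sum_(y < n) (A x y : nat) =
  \sum_(y < n) (A x y && A (f x) (f y) : nat) + pf f x.
  by rewrite -big_split; apply: eq_bigr => y _; case: (A x y); case: (A (f x) (f y)).
have e2 : \sum_(y < n) (A (f x) (f y) : nat) =
  \sum_(y < n) (A x y && A (f x) (f y) : nat) + qf f x.
  by rewrite -big_split; apply: eq_bigr => y _; case: (A x y); case: (A (f x) (f y)).
have e3 : \sum_(y < n) (A (f x) (f y) : nat) = 2.
  by rewrite -(deg (f x)) [RHS](reindex_inj (@perm_inj _ f)).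
move: e1 e2; rewrite deg e3; lia.
Qed.

Lemma deltaP f : delta_perm (@ccycle_adj n) f = \sum_(x < n) pf f x.
Proof.
have h := @double (fun x y => (A x y != A (f x) (f y) : nat)).
rewrite deltaE.
have : 2 * \sum_(x < n) \sum_(y < n | x < y) (A x y != A (f x) (f y) : nat)
     = 2 * \sum_(x < n) pf f x.
  rewrite -h; last first.
  - by move=> x; rewrite !cadj_irr.
  - by move=> x y; rewrite cadj_sym [A (f x) _]cadj_sym.
  rewrite mul2n -addnn -big_split /=; apply: eq_bigr => x _.
  rewrite [X in _ = _ + X]pq -big_split /=; apply: eq_bigr => y _.
  by case: (A x y); case: (A (f x) (f y)).
lia.
Qed.

Lemma sum_seq_le (F : 'I_n -> nat) (r : seq 'I_n) : uniq r ->
  \sum_(i <- r) F i <= \sum_(i < n) F i.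
Proof.
move=> ur; rewrite big_uniq //.
rewrite [X in _ <= X](bigID (mem r)) /=; exact: leq_addr.
Qed.

Lemma pos_ex (P : pred 'I_n) : 0 < \sum_(y < n) (P y : nat) -> exists y, P y.
Proof.
case: (pickP P) => [y hy|h]; first by exists y.
by rewrite big1 // => y _; rewrite h.
Qed.

Lemma ge1 (P : pred 'I_n) a : P a -> 1 <= \sum_(y < n) (P y : nat).
Proof.
move=> ha; have := @sum_seq_le (fun y => P y : nat) [:: a] erefl.
by rewrite big_cons big_nil ha.
Qed.

Lemma ge2 (P : pred 'I_n) a b : P a -> P b -> a != b -> 2 <= \sum_(y < n) (P y : nat).
Proof.
move=> ha hb nab.
have := @sum_seq_le (fun y => P y : nat) [:: a; b].
by rewrite !big_cons big_nil ha hb /= inE nab; apply.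
Qed.

Lemma lower f : 0 < \sum_(x < n) pf f x -> 4 <= \sum_(x < n) pf f x.
Proof.
move=> hpos.
have [x hx] : exists x, 0 < pf f x.
  case: (pickP (fun x => 0 < pf f x)) => [x hx|h]; first by exists x.
  by move: hpos; rewrite big1 // => x _; move: (h x) => /= /negbT; rewrite lt0n negbK => /eqP.
have [y /andP[Axy nBxy]] := pos_ex (fun y => A x y && ~~ A (f x) (f y)) hx.
have [z /andP[nAxz Bxz]] := pos_ex (fun z => ~~ A x z && A (f x) (f z)) (leq_trans hx (eq_leq (pq f x))).
have py : 0 < pf f y.
  apply: (ge1 (fun w => A y w && ~~ A (f y) (f w)) x).
  by rewrite (cadj_sym y x) (cadj_sym (f y) (f x)) Axy nBxy.
have [w /andP[nAyw Byw]] := pos_ex (fun w => ~~ A y w && A (f y) (f w)) (leq_trans py (eq_leq (pq f y))).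
have pz : 0 < pf f z.
  rewrite pq; apply: (ge1 (fun v => ~~ A z v && A (f z) (f v)) x).
  by rewrite (cadj_sym z x) (cadj_sym (f z) (f x)) nAxz Bxz.
have pw : 0 < pf f w.
  rewrite pq; apply: (ge1 (fun v => ~~ A w v && A (f w) (f v)) y).
  by rewrite (cadj_sym w y) (cadj_sym (f w) (f y)) nAyw Byw.
have xy : x != y by apply/eqP => e; move: Axy; rewrite e cadj_irr.
have xz : x != z by apply/eqP => e; move: Bxz; rewrite e cadj_irr.
have yz : y != z by apply/eqP => e; move: Axy nAxz; rewrite e => ->.
have yw : y != w by apply/eqP => e; move: Byw; rewrite e cadj_irr.
have xw : x != w by apply/eqP => e; move: nAyw; rewrite -e cadj_sym Axy.
case: (eqVneq z w) => [ezw|nzw].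
  subst w.
  have qz2 : 2 <= qf f z.
    apply: (ge2 (fun v => ~~ A z v && A (f z) (f v)) x y) => //=.
      by rewrite (cadj_sym z x) (cadj_sym (f z) (f x)) nAxz Bxz.
    by rewrite (cadj_sym z y) (cadj_sym (f z) (f y)) nAyw Byw.
  have := @sum_seq_le (pf f) [:: x; y; z].
  rewrite !big_cons big_nil /= !inE negb_or xy xz yz /= => /(_ isT). rewrite (pq f z); lia.
have := @sum_seq_le (pf f) [:: x; y; z; w].
rewrite !big_cons big_nil /= !inE !negb_or xy xz yz xw yw nzw /= => /(_ isT).
lia.
Qed.

Lemma sum_in_le (T : finType) (s : seq T) : \sum_(p : T) (p \in s : nat) <= size s.
Proof.
have -> : \sum_(p : T) (p \in s : nat) = \sum_(p in s) 1.
  by rewrite [RHS]big_mkcond; apply: eq_bigr => p _; case: (p \in s).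
by rewrite sum1_card card_size.
Qed.

Lemma example : exists f : {perm 'I_n}, \sum_(x < n) pf f x = 4.
Proof.
have h0 : 0 < n by lia.
have h1 : 1 < n by lia.
have h2 : 2 < n by lia.
have hm : n - 1 < n by lia.
pose i0 := Ordinal h0; pose i1 := Ordinal h1; pose i2 := Ordinal h2; pose im := Ordinal hm.
pose f := tperm i0 i1.
have valf : forall x : 'I_n, nat_of_ord (f x) =
    if nat_of_ord x == 0 then 1 else if nat_of_ord x == 1 then 0 else nat_of_ord x.
  move=> x; rewrite /f; case: tpermP => [->|->|/eqP h1' /eqP h2'] //=.
  by move: h1' h2'; rewrite !ordeqE /= => /negbTE -> /negbTE ->.
exists f; apply/eqP; rewrite eqn_leq; apply/andP; split; last first.
  apply: lower.
  have := @sum_seq_le (pf f) [:: i0] isT; rewrite big_cons big_nil addn0; apply: leq_trans.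
  apply: (ge1 (fun y => A i0 y && ~~ A (f i0) (f y)) im).
  rewrite (cadjE i0 im) (cadjE (f i0) (f im)) !valf /=; by repeat case: ifP; move=> *; lia.
pose s := [:: (i0, im); (im, i0); (i1, i2); (i2, i1)].
apply: (@leq_trans (\sum_(p : 'I_n * 'I_n) (p \in s : nat))); last by have := @sum_in_le _ s.
rewrite -(pair_bigA _ (fun x y => ((x, y) \in s : nat))) /=.
apply: leq_sum => x _; apply: leq_sum => y _.
case h: (A x y && ~~ A (f x) (f y)) => //=.
suff -> : (x, y) \in s by [].
move: h; rewrite /s !inE !xpair_eqE !ordeqE /= !cadjE !valf.
have := ltn_ord x; have := ltn_ord y.
by repeat case: ifP; move=> *; lia.
Qed.
End S.

Theorem mainTheorem1 (n : nat) : 5 <= n -> is_pi (@ccycle_adj n) 4.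
Proof.
move=> hn; split => //; split.
  have [f hf] := @example n hn; exists f; by rewrite (@deltaP n hn).
move=> f; rewrite (@deltaP n hn); exact: (@lower n hn f).
Qed.
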